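(* Let $k$ be a field, $(C,\Delta)$ a coassociative coalgebra, $(L,\phi)$ a Lie algebra and $B$ a Lie module over $L$ via $\psi:L\otimes B\to B$. Let $n\ge 0$ and $f\in Alt^n(L,B)$, with induced map $F$. Then $\delta F$ (defined below) equals the map $Hom(C,L)^{\otimes(n+1)}\to Hom(C,B)$ induced by $df\in Alt^{n+1}(L,B)$; in particular $\delta F$ is TD skew symmetric, so $\delta$ maps $TDalt^n(Hom(C,L),Hom(C,B))$ into $TDalt^{n+1}(Hom(C,L),Hom(C,B))$.
   Context: Iterated coproduct $\Delta^{(m-1)}:C\to C^{\otimes m}$ ($\Delta^{(0)}=\mathrm{id}$, $\Delta^{(m-1)}=(\Delta\otimes1\otimes\dots\otimes1)\circ\Delta^{(m-2)}$), written $\sum c_{(1)}\otimes\dots\otimes c_{(m)}$. $S_m$ acts on $m$-fold tensor products by $\sigma(x_1\otimes\dots\otimes x_m)=x_{\sigma(1)}\otimes\dots\otimes x_{\sigma(m)}$. For $\chi:X_1\otimes\dots\otimes X_m\to Y$, the induced map sends $f_1\otimes\dots\otimes f_m$ ($f_j\in Hom(C,X_j)$) to $\chi\circ(f_1\otimes\dots\otimes f_m)\circ\Delta^{(m-1)}$. A map $G:Hom(C,L)^{\otimes m}\to Hom(C,B)$ induced by $\chi$ is TD skew if $G\circ\sigma=(-1)^\sigma G^{\sigma^{-1}}$ for all $\sigma\in S_m$, where $G^\sigma(f_1\otimes\dots\otimes f_m)=\chi\circ(f_1\otimes\dots\otimes f_m)\circ\sigma\circ\Delta^{(m-1)}$.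 $Alt^n(L,B)$ is the space of skew symmetric linear maps $L^{\otimes n}\to B$, with $Alt^0(L,B)=B$; the Chevalley–Eilenberg differential is $df(x_1,\dots,x_{n+1})=\sum_{i=1}^{n+1}(-1)^{i+1}\psi(x_i,f(x_1,\dots,\hat{x_i},\dots,x_{n+1}))+\sum_{j<k}(-1)^{j+k}f(\phi(x_j,x_k),x_1,\dots,\hat{x_j},\dots,\hat{x_k},\dots,x_{n+1})$. $TDalt^n(Hom(C,L),Hom(C,B))$ is the space of TD skew maps $Hom(C,L)^{\otimes n}\to Hom(C,B)$ (for $n=0$ identified with $B$). Let $\Phi,\Psi$ be the maps induced by $\phi,\psi$ and $F$ the map induced by $f$. For $\sigma\in S_{n+1}$ define $(\Psi\circ(1\otimes F))^{\sigma}(g_1\otimes\dots\otimes g_{n+1})(c)=\sum\psi\big(g_1(c_{(\sigma(1))}),f(g_2(c_{(\sigma(2))})\otimes\dots\otimes g_{n+1}(c_{(\sigma(n+1))}))\big)$ and, for $n\ge1$, $(F\circ(\Phi\otimes1))^{\sigma}(g_1\otimes\dots\otimes g_{n+1})(c)=\sum f\big(\phi(g_1(c_{(\sigma(1))}),g_2(c_{(\sigma(2))}))\otimes g_3(c_{(\sigma(3))})\otimes\dots\otimes g_{n+1}(c_{(\sigma(n+1))})\big)$. A $(p,q)$-unshuffle is $\sigma\in S_{p+q}$ with $\sigma(1)<\dots<\sigma(p)$ and $\sigma(p+1)<\dots<\sigma(p+q)$. Define $$\delta F=\sum_{\sigma}(-1)^{\sigma}(\Psi\circ(1\otimes F))^{\sigma}\circ\sigma-\sum_{\sigma'}(-1)^{\sigma'}(F\circ(\Phi\otimes1))^{\sigma'}\circ\sigma',$$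 $\sigma$ over $(1,n)$-unshuffles, $\sigma'$ over $(2,n-1)$-unshuffles (the second sum is empty for $n=0$), and $\sigma$ acting on $Hom(C,L)^{\otimes(n+1)}$ by permuting factors. For $n=0$ this reads $(\delta F)(g)(c)=\psi(g(c),f)$. *)

(* Defs.v *)
From HB Require Import structures.
From mathcomp Require Import all_boot all_order all_algebra.
From mathcomp Require Import fingroup perm.
Set Implicit Arguments. Unset Strict Implicit. Unset Printing Implicit Defensive.
Import GRing.Theory.
Local Open Scope ring_scope.

(* Conventions: multilinear maps on L^{(x) m} are modelled as functions
   [seq L -> B] used on sequences of size m; a coproduct C -> C (x) C is
   modelled (Sweedler-style) by a function returning a finite list of pairs
   (a,b) standing for  sum a (x) b ; equality of tensors is tested against
   all multilinear forms. *)

Section Defs.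
Variable k : fieldType.

Section Coalg.
Variable C : lmodType k.
Variable cop : C -> seq (C * C).

Definition bilinear_form (beta : C -> C -> k) :=
  (forall a x y z, beta (a *: x + y) z = a * beta x z + beta y z) /\
  (forall a x y z, beta z (a *: x + y) = a * beta z x + beta z y).

Definition trilinear_form (beta : C -> C -> C -> k) :=
  (forall a x y z w, beta (a *: x + y) z w = a * beta x z w + beta y z w) /\
  (forall a x y z w, beta z (a *: x + y) w = a * beta z x w + beta z y w) /\
  (forall a x y z w, beta z w (a *: x + y) = a * beta z w x + beta z w y).

Definition cop_linear := forall beta, bilinear_form beta ->
  forall a x y,
    \sum_(p <- cop (a *: x + y)) beta p.1 p.2 =
    a * \sum_(p <- cop x) beta p.1 p.2 + \sum_(p <- cop y) beta p.1 p.2.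

(* (Delta (x) 1) Delta = (1 (x) Delta) Delta in C (x) C (x) C *)
Definition coassociative := forall beta, trilinear_form beta -> forall c,
  \sum_(p <- cop c) \sum_(q <- cop p.1) beta q.1 q.2 p.2 =
  \sum_(p <- cop c) \sum_(q <- cop p.2) beta p.1 q.1 q.2.

Definition coalgebra := cop_linear /\ coassociative.

(* iter_cop m c represents Delta^{(m)} c in C^{(x)(m+1)}, with
   Delta^{(0)} = id, Delta^{(m)} = (Delta (x) 1 (x) ... (x) 1) o Delta^{(m-1)} *)
Fixpoint iter_cop (m : nat) (c : C) : seq (seq C) :=
  if m is m'.+1 then
    flatten [seq [seq p.1 :: p.2 :: behead t | p <- cop (head 0 t)]
            | t <- iter_cop m' c]
  else [:: [:: c]].
End Coalg.

Section Lie.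
Variables (L B : lmodType k).
Variable phi : L -> L -> L.
Variable psi : L -> B -> B.

Definition lie_algebra :=
  (forall a x y z, phi (a *: x + y) z = a *: phi x z + phi y z) /\
  (forall a x y z, phi z (a *: x + y) = a *: phi z x + phi z y) /\
  (forall x, phi x x = 0) /\
  (forall x y z, phi x (phi y z) + phi y (phi z x) + phi z (phi x y) = 0).

Definition lie_module :=
  (forall a x y b, psi (a *: x + y) b = a *: psi x b + psi y b) /\
  (forall a x b b', psi x (a *: b + b') = a *: psi x b + psi x b') /\
  (forall x y b, psi (phi x y) b = psi x (psi y b) - psi y (psi x b)).

Definition multilinear (n : nat) (f : seq L -> B) :=
  forall s, size s = n -> forall i, (i < n)%N -> forall a x y,
    f (set_nth 0 s i (a *: x + y)) =
    a *: f (set_nth 0 s i x) + f (set_nth 0 s i y).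

Definition skew (n : nat) (f : seq L -> B) :=
  forall s, size s = n -> forall sigma : 'S_n,
    f [seq nth 0 s (sigma i) | i <- enum 'I_n] = (-1) ^+ sigma *: f s.

(* Alt^n(L,B); for n = 0, f [::] is the element of B *)
Definition Alt (n : nat) (f : seq L -> B) := multilinear n f /\ skew n f.

Definition rem_at (T : Type) (i : nat) (s : seq T) := take i s ++ drop i.+1 s.

(* Chevalley-Eilenberg differential, indices 0-based *)
Definition CE_d (f : seq L -> B) (s : seq L) : B :=
  \sum_(i < size s) (-1) ^+ i *: psi (nth 0 s i) (f (rem_at i s)) +
  \sum_(j < size s) \sum_(l < size s | (j < l)%N)
     (-1) ^+ (j + l) *: f (phi (nth 0 s j) (nth 0 s l) :: rem_at j (rem_at l s)).

Variable C : lmodType k.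
Variable cop : C -> seq (C * C).

(* value at g_1 (x) ... (x) g_m (a pure tensor; these span) and at c *)
Definition induced (m : nat) (chi : seq L -> B)
    (g : 'I_m -> {linear C -> L}) (c : C) : B :=
  \sum_(t <- iter_cop cop m.-1 c) chi [seq g i (nth 0 t i) | i <- enum 'I_m].

Definition twisted (m : nat) (chi : seq L -> B) (tau : 'S_m)
    (g : 'I_m -> {linear C -> L}) (c : C) : B :=
  \sum_(t <- iter_cop cop m.-1 c)
     chi [seq g i (nth 0 t (tau i)) | i <- enum 'I_m].

Definition induced_by (m : nat) (chi : seq L -> B)
    (G : ('I_m -> {linear C -> L}) -> C -> B) :=
  forall g c, G g c = induced chi g c.

Definition TD_skew (m : nat) (chi : seq L -> B)
    (G : ('I_m -> {linear C -> L}) -> C -> B) :=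
  induced_by chi G /\
  forall (sigma : 'S_m) g c,
    G (fun i => g (sigma i)) c = (-1) ^+ sigma *: twisted chi sigma^-1 g c.

Definition unshuffle (m p : nat) (sigma : 'S_m) : bool :=
  (p <= m)%N &&
  [forall i : 'I_m, forall j : 'I_m,
     ((i < j)%N && ((j < p)%N || (p <= i)%N)) ==> (sigma i < sigma j)%N].

Definition permuted_vals (m : nat) (sigma : 'S_m)
    (g : 'I_m -> {linear C -> L}) (t : seq C) : seq L :=
  [seq g (sigma i) (nth 0 t (sigma i)) | i <- enum 'I_m].

Definition deltaF (m : nat) (f : seq L -> B)
    (g : 'I_m -> {linear C -> L}) (c : C) : B :=
  \sum_(sigma : 'S_m | unshuffle 1 sigma) (-1) ^+ sigma *:
     \sum_(t <- iter_cop cop m.-1 c)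
        (let xs := permuted_vals sigma g t in
         psi (nth 0 xs 0) (f (drop 1 xs)))
  - \sum_(sigma : 'S_m | unshuffle 2 sigma) (-1) ^+ sigma *:
     \sum_(t <- iter_cop cop m.-1 c)
        (let xs := permuted_vals sigma g t in
         f (phi (nth 0 xs 0) (nth 0 xs 1) :: drop 2 xs)).
End Lie.
End Defs.

(* Main.v *)
Require Import Defs.
From HB Require Import structures.
From mathcomp Require Import all_boot all_order all_algebra.
From mathcomp Require Import fingroup perm zify.
Set Implicit Arguments. Unset Strict Implicit.
Import GRing.Theory.
Local Open Scope ring_scope.

Definition bmp (i j : nat) : nat := if (j < i)%N then j else j.+1.
Definition swn (p j : nat) : nat := if j == p then p.+1 else if j == p.+1 then p else j.
Definition rhon (i x : nat) : nat := if x == 0%N then i else bmp i x.-1.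
Lemma bmpP i j : ((j < i)%N /\ bmp i j = j) \/ ((i <= j)%N /\ bmp i j = j.+1).
Proof. rewrite /bmp; case: ltnP; auto. Qed.
Lemma swnP p j : (j = p /\ swn p j = p.+1) \/ (j = p.+1 /\ swn p j = p) \/ (j <> p /\ j <> p.+1 /\ swn p j = j).
Proof. rewrite /swn; case: eqP; auto; case: eqP; auto. Qed.
Lemma rhonP i x : (x = 0%N /\ rhon i x = i) \/ ((0 < x)%N /\ rhon i x = bmp i x.-1).
Proof. rewrite /rhon; case: eqP; auto => H; right; split => //; lia. Qed.
Ltac no_fn t := lazymatch t with
 | context [bmp _ _] => fail | context [swn _ _] => fail | context [rhon _ _] => fail
 | _ => idtac end.
Ltac bcase := match goal with
 | |- context [rhon ?i ?j] => no_fn i; no_fn j; let H := fresh in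
     destruct (rhonP i j) as [[H ->]|[H ->]]; revert H
 | |- context [bmp ?i ?j] => no_fn i; no_fn j; let H := fresh in
     destruct (bmpP i j) as [[H ->]|[H ->]]; revert H
 | |- context [swn ?i ?j] => no_fn i; no_fn j; let H := fresh in let H' := fresh in
     destruct (swnP i j) as [[H ->]|[[H ->]|[H [H' ->]]]]; [revert H|revert H|revert H H']
 end.
Ltac crunch := first [solve [intros; lia] | bcase; crunch].
Ltac prep := repeat match goal with
  | H : context [bmp _ _] |- _ => revert H
  | H : context [swn _ _] |- _ => revert H
  | H : context [rhon _ _] |- _ => revert H end.
Ltac elim_b := prep; crunch.

Section Lists.
Variable V : zmodType.
Implicit Types s : seq V.
Definition lmap s (g : nat -> nat) k : seq V := [seq nth 0 s (g j) | j <- iota 0 k].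
Lemma size_lmap s g k : size (lmap s g k) = k.
Proof. by rewrite size_map size_iota. Qed.
Lemma nth_lmap s g k j : (j < k)%N -> nth 0 (lmap s g k) j = nth 0 s (g j).
Proof. by move=> Hj; rewrite (nth_map 0%N) ?size_iota // nth_iota // add0n. Qed.
Lemma eq_lmap s g1 g2 k : (forall j, (j < k)%N -> g1 j = g2 j) -> lmap s g1 k = lmap s g2 k.
Proof.
move=> H; apply: (@eq_from_nth _ 0); rewrite !size_lmap // => j Hj.
by rewrite !nth_lmap // H.
Qed.
Lemma lmap_comp s g h k k' : (forall j, (j < k')%N -> (h j < k)%N) ->
  lmap (lmap s g k) h k' = lmap s (fun j => g (h j)) k'.
Proof.
move=> H; apply: (@eq_from_nth _ 0); rewrite !size_lmap // => j Hj.
by rewrite !nth_lmap ?H.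
Qed.
Lemma lmap_id s : lmap s id (size s) = s.
Proof.
apply: (@eq_from_nth _ 0); rewrite !size_lmap // => j Hj.
by rewrite !nth_lmap.
Qed.
Lemma rem_atE i s : (i < size s)%N -> rem_at i s = lmap s (bmp i) (size s).-1.
Proof.
move=> Hi; apply: (@eq_from_nth _ 0).
  rewrite size_lmap /rem_at size_cat size_take size_drop Hi /=; lia.
move=> j; rewrite /rem_at size_cat size_take size_drop Hi /= => Hj.
rewrite nth_lmap; last lia.
rewrite nth_cat size_take Hi /bmp; case: ltnP => Hji; first by rewrite nth_take.
by rewrite nth_drop; congr nth; lia.
Qed.
Lemma rem2E s j l : (j < l)%N -> (l < size s)%N ->
  rem_at j (rem_at l s) = lmap s (fun q => bmp l (bmp j q)) (size s).-2.
Proof.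
move=> Hjl Hl; rewrite (rem_atE Hl) rem_atE ?size_lmap; last lia.
rewrite lmap_comp // => q Hq; elim_b.
Qed.
Lemma drop_lmap p s g k : drop p (lmap s g k) = lmap s (fun j => g (p + j)%N) (k - p).
Proof.
apply: (@eq_from_nth _ 0); rewrite size_drop !size_lmap // => j Hj.
by rewrite nth_drop !nth_lmap //; lia.
Qed.
Lemma nth_set s p v j : nth 0 (set_nth 0 s p v) j = if j == p then v else nth 0 s j.
Proof. by rewrite nth_set_nth. Qed.
Lemma rem_set s (i p : nat) v : i != p -> (i < size s)%N -> (p < size s)%N ->
  rem_at i (set_nth 0 s p v) = set_nth 0 (rem_at i s) (if (p < i)%N then p else p.-1) v.
Proof.
move=> /eqP Hip Hi Hp.
have Hsz : size (set_nth 0 s p v) = size s by rewrite size_set_nth; apply/maxn_idPr.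
rewrite !rem_atE ?Hsz //; clear Hsz.
apply: (@eq_from_nth _ 0).
  rewrite size_set_nth !size_lmap; symmetry; apply/maxn_idPr; case: (ltnP p i) => ? /=; lia.
rewrite size_lmap => j Hj; rewrite nth_lmap // !nth_set nth_lmap //.
have -> : (bmp i j == p) = (j == if (p < i)%N then p else p.-1).
  case: (ltnP p i) => H /=; apply/eqP/eqP => E; elim_b.
by [].
Qed.
Lemma rem_set_same s (p : nat) v : (p < size s)%N -> rem_at p (set_nth 0 s p v) = rem_at p s.
Proof.
move=> Hp.
have Hsz : size (set_nth 0 s p v) = size s by rewrite size_set_nth; apply/maxn_idPr.
rewrite !rem_atE ?Hsz //; clear Hsz.
apply: (@eq_from_nth _ 0); rewrite !size_lmap // => j Hj.
rewrite !nth_lmap // nth_set.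
have -> : (bmp p j == p) = false by apply/eqP; elim_b.
by [].
Qed.

Definition plist m s (sg : 'S_m) : seq V := [seq nth 0 s (sg i) | i <- enum 'I_m].
Lemma size_plist m s sg : size (@plist m s sg) = m.
Proof. by rewrite size_map size_enum_ord. Qed.
Lemma nth_map_enum m (F : 'I_m -> V) (i : 'I_m) : nth 0 [seq F j | j <- enum 'I_m] i = F i.
Proof. by rewrite (nth_map i) ?size_enum_ord ?ltn_ord // nth_ord_enum. Qed.
Lemma nth_plist m s sg (i : 'I_m) : nth 0 (plist s sg) i = nth 0 s (sg i).
Proof. exact: nth_map_enum. Qed.
Lemma plist_lmap m s (sg : 'S_m) g : (forall i : 'I_m, val (sg i) = g (val i)) ->
  plist s sg = lmap s g m.
Proof.
move=> H; apply: (@eq_from_nth _ 0); rewrite size_plist ?size_lmap // => j Hj.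
by rewrite -[j]/(val (Ordinal Hj)) nth_plist nth_lmap // H.
Qed.
Lemma plistM m s (sg tau : 'S_m) : plist (plist s sg) tau = plist s (tau * sg)%g.
Proof.
apply: (@eq_from_nth _ 0); rewrite !size_plist // => j Hj.
by rewrite -[j]/(val (Ordinal Hj)) !nth_plist permM.
Qed.
End Lists.

Lemma tperm_val m (x y : 'I_m) p : nat_of_ord x = p -> nat_of_ord y = p.+1 ->
  forall i, nat_of_ord (tperm x y i) = swn p (nat_of_ord i).
Proof.
move=> Hx Hy i; case: tpermP => [->|->|Hix Hiy]; rewrite ?Hx ?Hy.
- by rewrite /swn eqxx.
- rewrite /swn; case: eqP => [|_]; [lia| by rewrite eqxx].
- have H1 : nat_of_ord i <> p by move=> E; apply: Hix; apply: val_inj; rewrite /= E Hx.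
  have H2 : nat_of_ord i <> p.+1 by move=> E; apply: Hiy; apply: val_inj; rewrite /= E Hy.
  elim_b.
Qed.
Lemma odd_tperm_adj m (x y : 'I_m) p : nat_of_ord x = p -> nat_of_ord y = p.+1 -> odd_perm (tperm x y) = true.
Proof.
move=> Hx Hy; rewrite odd_tperm; apply/eqP => E; move: Hy; rewrite -E Hx; lia.
Qed.

Section Skew.
Variables (V : zmodType) (K : fieldType) (W : lmodType K) (m : nat) (h : seq V -> W).
Hypothesis Hsw : forall s p, size s = m -> (p.+1 < m)%N -> h (lmap s (swn p) m) = - h s.
Definition Pskew (sg : 'S_m) := forall s, size s = m -> h (plist s sg) = (-1) ^+ sg *: h s.
Lemma Pskew1 : Pskew 1.
Proof.
move=> s Hs; rewrite odd_perm1 expr0 scale1r.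
rewrite (@plist_lmap _ _ _ _ id) => [|i]; last by rewrite perm1.
by rewrite -Hs lmap_id.
Qed.
Lemma PskewM sg tau : Pskew sg -> Pskew tau -> Pskew (tau * sg)%g.
Proof.
move=> Hs Ht s Hsz.
by rewrite -plistM Ht ?size_plist // Hs // scalerA -signr_addb -odd_permM.
Qed.
Lemma Pskew_adj (x y : 'I_m) p : nat_of_ord x = p -> nat_of_ord y = p.+1 -> Pskew (tperm x y).
Proof.
move=> Hx Hy s Hs.
rewrite (plist_lmap s (tperm_val Hx Hy)) (odd_tperm_adj Hx Hy) expr1 scaleN1r.
apply: Hsw => //; rewrite -Hy; exact: ltn_ord.
Qed.
Lemma Pskew_dist d : forall x y : 'I_m, nat_of_ord y = (nat_of_ord x + d.+1)%N -> Pskew (tperm x y).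
Proof.
elim: d => [|d IH] x y Hxy.
  by apply: (Pskew_adj (p := nat_of_ord x)); rewrite // Hxy addn1.
have Hz : ((nat_of_ord y).-1 < m)%N by have := ltn_ord y; lia.
set z := Ordinal Hz.
have Hzx : z != x by apply/eqP => E; move: (f_equal (@nat_of_ord _) E) => /=; lia.
have Hzy : y != x by apply/eqP => E; move: (f_equal (@nat_of_ord _) E) => /=; lia.
have -> : tperm x y = (tperm z y * tperm x z * tperm z y)%g.
  have E := tpermJ x z (tperm z y).
  by rewrite tpermL (tpermD Hzx Hzy) conjgE tpermV mulgA in E; rewrite -E.
apply: PskewM; last apply: PskewM.
- by apply: (Pskew_adj (p := nat_of_ord z)) => //=; lia.
- by apply: IH => /=; lia.
- by apply: (Pskew_adj (p := nat_of_ord z)) => //=; lia.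
Qed.
Lemma Pskew_tperm (x y : 'I_m) : Pskew (tperm x y).
Proof.
case: (ltngtP (nat_of_ord x) (nat_of_ord y)) => H.
- by apply: (Pskew_dist (d := (nat_of_ord y - nat_of_ord x).-1)); lia.
- by rewrite tpermC; apply: (Pskew_dist (d := (nat_of_ord x - nat_of_ord y).-1)); lia.
- have -> : x = y by apply: val_inj; exact: H.
  by rewrite tperm1; exact: Pskew1.
Qed.
Lemma skew_of_swaps (sg : 'S_m) : Pskew sg.
Proof.
case: (prod_tpermP sg) => ts -> _; elim: ts => [|t ts IH].
  by rewrite big_nil; exact: Pskew1.
by rewrite big_cons; apply: PskewM => //; exact: Pskew_tperm.
Qed.
End Skew.

Lemma unshP m p (sg : 'S_m) : unshuffle p sg ->
  forall i j : 'I_m, (i < j)%N -> ((j < p)%N || (p <= i)%N) -> (sg i < sg j)%N.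
Proof.
case/andP => _ /forallP H i j Hij Hc.
by move: (H i) => /forallP/(_ j)/implyP; apply; rewrite Hij Hc.
Qed.
Lemma unshI m p (sg : 'S_m) : (p <= m)%N ->
  (forall i j : 'I_m, (i < j)%N -> ((j < p)%N || (p <= i)%N) -> (sg i < sg j)%N) ->
  unshuffle p sg.
Proof.
move=> Hp H; apply/andP; split=> //; apply/forallP => i; apply/forallP => j.
by apply/implyP => /andP [Hij Hc]; exact: H.
Qed.
Lemma unsh_uniq m p (sg sg' : 'S_m) : unshuffle p sg -> unshuffle p sg' ->
  (forall x : 'I_m, (x < p)%N -> sg x = sg' x) -> sg = sg'.
Proof.
move=> U U' Hag.
have key : forall (t t' : 'S_m), unshuffle p t -> unshuffle p t' ->
    forall x : 'I_m, (p <= x)%N ->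
    (forall y : 'I_m, (y < x)%N -> t y = t' y) -> ~ (t x < t' x)%N.
  move=> t t' Ut Ut' x Hpx Hy Hlt.
  set y := (t'^-1)%g (t x).
  have Ey : t' y = t x by rewrite /y permKV.
  case: (ltngtP y x) => Hyx.
  - have := Hy _ Hyx; rewrite Ey => /perm_inj E.
    by move: Hyx; rewrite E ltnn.
  - have := unshP Ut' Hyx; rewrite Hpx orbT => /(_ isT); rewrite Ey; lia.
  - have E : y = x by apply: ord_inj.
    by move: Hlt; rewrite -Ey E ltnn.
apply/permP => x.
have [q Hq] := ubnP (nat_of_ord x).
elim: q x Hq => // q IH x Hxq.
case: (ltnP x p) => Hxp; first exact: Hag.
have Hy : forall y : 'I_m, (y < x)%N -> sg y = sg' y by move=> y Hy; apply: IH; lia.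
apply: ord_inj; case: (ltngtP (sg x) (sg' x)) => // H.
- by exfalso; apply: (key sg sg' U U' x Hxp Hy H).
- by exfalso; apply: (key sg' sg U' U x Hxp (fun y H => esym (Hy y H)) H).
Qed.

Section Rho.
Variable n : nat.
Definition rho_fun (i : nat) (x : 'I_n.+1) : 'I_n.+1 :=
  if (i <= n)%N then inord (rhon i x) else x.
Lemma rho_inj i : injective (rho_fun i).
Proof.
rewrite /rho_fun; case: leqP => Hi x y //.
have Hx := ltn_ord x; have Hy := ltn_ord y.
move=> /(f_equal (@nat_of_ord _)); rewrite !inordK; [|elim_b|elim_b].
move=> E; apply: ord_inj; elim_b.
Qed.
Definition rho i : 'S_n.+1 := perm (@rho_inj i).
Lemma rhoE i (x : 'I_n.+1) : (i <= n)%N -> nat_of_ord (rho i x) = rhon i x.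
Proof. move=> Hi; rewrite permE /rho_fun Hi inordK //; have := ltn_ord x; elim_b. Qed.
Lemma odd_rho i : (i <= n)%N -> odd_perm (rho i) = odd i.
Proof.
elim: i => [|i IH] Hi.
  have -> : rho 0 = 1%g.
    by apply/permP => x; apply: ord_inj; rewrite rhoE // perm1; elim_b.
  by rewrite odd_perm1.
have Hi' : (i <= n)%N by lia.
have -> : rho i.+1 = (rho i * tperm (inord i) (inord i.+1))%g.
  apply/permP => x; apply: ord_inj.
  rewrite permM (tperm_val (p:=i)) ?inordK // ?rhoE //; try lia.
  have := ltn_ord x; elim_b.
rewrite odd_permM IH // (odd_tperm_adj (p:=i)) ?inordK //; try lia;
  try by rewrite /= addbT.
Qed.
Lemma rho_unsh1 (i : 'I_n.+1) : unshuffle 1 (rho i).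
Proof.
have Hi := ltn_ord i.
apply: unshI => // x y Hxy /orP [H|H]; rewrite !rhoE //; elim_b.
Qed.
Lemma sum_unsh1 (W : zmodType) (F : 'S_n.+1 -> W) :
  \sum_(sg | unshuffle 1 sg) F sg = \sum_(i < n.+1) F (rho i).
Proof.
transitivity (\sum_(sg in [set rho i | i : 'I_n.+1]) F sg).
  apply: eq_bigl => sg; apply/idP/imsetP.
  - move=> U; exists (sg ord0) => //.
    apply: (unsh_uniq U (rho_unsh1 _)) => x Hx.
    have -> : x = ord0 by apply: ord_inj; rewrite /=; lia.
    by apply: ord_inj; rewrite rhoE //; have := ltn_ord (sg ord0).
  - by case=> i _ ->; exact: rho_unsh1.
rewrite big_imset /=; first by apply: eq_bigl.
move=> i j _ _ E; apply: ord_inj.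
have := f_equal (fun s : 'S_n.+1 => nat_of_ord (s ord0)) E.
by rewrite /= !rhoE //; [have := ltn_ord j | have := ltn_ord i].
Qed.

Definition rho2 (j l : nat) : 'S_n.+1 := (rho j.+1 * rho l)%g.
Lemma rho2E j l x : (j < l)%N -> (l <= n)%N -> nat_of_ord (rho2 j l x) = rhon l (rhon j.+1 x).
Proof. by move=> H1 H2; rewrite permM rhoE // rhoE //; lia. Qed.
Lemma odd_rho2 j l : (j < l)%N -> (l <= n)%N -> odd_perm (rho2 j l) = odd j.+1 (+) odd l.
Proof. by move=> H1 H2; rewrite odd_permM !odd_rho //; lia. Qed.
Lemma rho2_unsh2 (j l : 'I_n.+1) : (j < l)%N -> unshuffle 2 (rho2 j l).
Proof.
have Hl := ltn_ord l => Hjl.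
apply: unshI; first lia.
by move=> x y Hxy /orP [H|H]; rewrite !rho2E //; elim_b.
Qed.
Lemma sum_unsh2 (W : zmodType) (F : 'S_n.+1 -> W) :
  \sum_(sg | unshuffle 2 sg) F sg =
  \sum_(p : 'I_n.+1 * 'I_n.+1 | (p.1 < p.2)%N) F (rho2 p.1 p.2).
Proof.
transitivity (\sum_(sg in [set rho2 p.1 p.2 | p : 'I_n.+1 * 'I_n.+1 in [set p : 'I_n.+1 * 'I_n.+1 | (p.1 < p.2)%N]]) F sg).
  apply: eq_bigl => sg; apply/idP/imsetP.
  - move=> U; have Hn : (2 <= n.+1)%N by case/andP: U.
    pose o0 : 'I_n.+1 := inord 0; pose o1 : 'I_n.+1 := inord 1.
    have E0 : nat_of_ord o0 = 0%N by rewrite inordK.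
    have E1 : nat_of_ord o1 = 1%N by rewrite inordK.
    have H01 : (sg o0 < sg o1)%N by apply: (unshP U); rewrite E0 E1.
    exists (sg o0, sg o1); first by rewrite inE.
    apply: (unsh_uniq U (rho2_unsh2 H01)) => x Hx.
    have Hl := ltn_ord (sg o1).
    apply: ord_inj; rewrite rho2E //=.
    have [E|E] : nat_of_ord x = 0%N \/ nat_of_ord x = 1%N by lia.
    + have -> : x = o0 by apply: ord_inj; rewrite E E0.
      rewrite E0; elim_b.
    + have -> : x = o1 by apply: ord_inj; rewrite E E1.
      rewrite E1; elim_b.
  - by case=> p; rewrite inE => Hp ->; exact: rho2_unsh2.
rewrite big_imset /=; first by apply: eq_bigl => p; rewrite inE.
move=> [a b] [c d]; rewrite !inE /= => Hab Hcd E.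
have Hb := ltn_ord b; have Hd := ltn_ord d.
have Hn : (1 <= n)%N by lia.
pose o0 : 'I_n.+1 := inord 0; pose o1 : 'I_n.+1 := inord 1.
have E0 : nat_of_ord o0 = 0%N by rewrite inordK.
have E1 : nat_of_ord o1 = 1%N by rewrite inordK.
have F0 := f_equal (fun s : 'S_n.+1 => nat_of_ord (s o0)) E.
have F1 := f_equal (fun s : 'S_n.+1 => nat_of_ord (s o1)) E.
move: F0 F1; rewrite /= !rho2E // E0 E1 => F0 F1.
clear E E0 E1 o0 o1 F.
have Ha := ltn_ord a; have Hc := ltn_ord c.
move: F0 F1; rewrite /rhon /= /bmp Hab Hcd => F0 F1.
by congr pair; apply: ord_inj.
Qed.
End Rho.

Lemma self_add0 (V : zmodType) (x : V) : x = x + x -> x = 0.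
Proof. by move=> H; have := congr1 (fun v => v - x) H; rewrite /= subrr addrK => <-. Qed.
Lemma sgn_adj (K : pzRingType) (x y : nat) : (x = y.+1 \/ y = x.+1) -> (-1) ^+ x = - (-1) ^+ y :> K.
Proof. by case=> ->; rewrite exprS mulN1r ?opprK. Qed.
Lemma size_rem_at (V : zmodType) (s : seq V) i : (i < size s)%N -> size (rem_at i s) = (size s).-1.
Proof. by move=> Hi; rewrite rem_atE // size_lmap. Qed.
Lemma rem_setP (V : zmodType) (s : seq V) (i p : nat) : i != p -> (i < size s)%N -> (p < size s)%N ->
  { p' | [/\ (p' < (size s).-1)%N, ((p < i)%N -> p' = p) & ((i < p)%N -> p' = p.-1)] &
         forall v, rem_at i (set_nth 0 s p v) = set_nth 0 (rem_at i s) p' v }.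
Proof.
move=> Hip Hi Hp; exists (if (p < i)%N then p else p.-1).
  move/eqP: Hip => Hip; case: (ltnP p i) => H; split => //; lia.
by move=> v; rewrite rem_set.
Qed.

Section Main.
Variables (K : fieldType) (L B : lmodType K) (phi : L -> L -> L) (psi : L -> B -> B).
Variables (n : nat) (f : seq L -> B).
Hypothesis Hphi1 : forall a x y z, phi (a *: x + y) z = a *: phi x z + phi y z.
Hypothesis Hphi2 : forall a x y z, phi z (a *: x + y) = a *: phi z x + phi z y.
Hypothesis Hphi0 : forall x, phi x x = 0.
Hypothesis Hpsi1 : forall a x y b, psi (a *: x + y) b = a *: psi x b + psi y b.
Hypothesis Hpsi2 : forall a x b b', psi x (a *: b + b') = a *: psi x b + psi x b'.
Hypothesis Hfml : multilinear n f.
Hypothesis Hfsk : Defs.skew n f.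

Lemma phiD x y z : phi (x + y) z = phi x z + phi y z.
Proof. by rewrite -{1}[x]scale1r Hphi1 scale1r. Qed.
Lemma phiD2 x y z : phi z (x + y) = phi z x + phi z y.
Proof. by rewrite -{1}[x]scale1r Hphi2 scale1r. Qed.
Lemma phi_anti x y : phi y x = - phi x y.
Proof.
have := Hphi0 (x + y); rewrite phiD !phiD2 !Hphi0 add0r addr0 => /eqP.
by rewrite addr_eq0 => /eqP ->; rewrite opprK.
Qed.
Lemma psi0 x : psi x 0 = 0.
Proof. by apply: self_add0; have := Hpsi2 1 x 0 0; rewrite scaler0 addr0 scale1r. Qed.
Lemma psiN x b : psi x (- b) = - psi x b.
Proof. by have := Hpsi2 (-1) x b 0; rewrite !addr0 psi0 addr0 !scaleN1r. Qed.
Lemma fcons_lin R : size R = n.-1 -> (0 < n)%N ->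
  forall a u w, f ((a *: u + w) :: R) = a *: f (u :: R) + f (w :: R).
Proof.
move=> HR Hn a u w.
have H0 : size (0 :: R) = n by rewrite /= HR; lia.
exact: (Hfml H0 Hn a u w).
Qed.
Lemma fcons0 R : size R = n.-1 -> (0 < n)%N -> f (0 :: R) = 0.
Proof.
move=> HR Hn; apply: self_add0; have := fcons_lin HR Hn 1 0 0.
by rewrite scaler0 addr0 scale1r.
Qed.
Lemma fconsN R u : size R = n.-1 -> (0 < n)%N -> f (- u :: R) = - f (u :: R).
Proof.
move=> HR Hn; have := fcons_lin HR Hn (-1) u 0.
by rewrite addr0 !scaleN1r fcons0 // addr0.
Qed.
Lemma f_swap u p : size u = n -> (p.+1 < n)%N -> f (lmap u (swn p) n) = - f u.
Proof.
move=> Hu Hp; have Hp0 : (p < n)%N by lia.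
pose x : 'I_n := Ordinal Hp0; pose y : 'I_n := Ordinal Hp.
have H : f (plist u (tperm x y)) = (-1) ^+ (tperm x y) *: f u := Hfsk Hu (tperm x y).
rewrite (plist_lmap u (tperm_val (x:=x) (y:=y) (p := p) erefl erefl)) in H.
by rewrite H (odd_tperm_adj (x:=x) (y:=y) (p := p) erefl erefl) expr1 scaleN1r.
Qed.
Lemma f_swap_cons z R p : size R = n.-1 -> (p.+1 < n.-1)%N ->
  f (z :: lmap R (swn p) n.-1) = - f (z :: R).
Proof.
move=> HR Hp.
have E : z :: lmap R (swn p) n.-1 = lmap (z :: R) (swn p.+1) n.
  apply: (@eq_from_nth _ 0); rewrite /= !size_lmap; first lia.
  move=> [|j] Hj.
    by rewrite nth_lmap /=; last lia.
  rewrite /= nth_lmap; last lia.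
  rewrite nth_lmap; last lia.
  by have -> : swn p.+1 j.+1 = (swn p j).+1 by elim_b.
have Hz : size (z :: R) = n by rewrite /= HR; lia.
by rewrite E f_swap //; lia.
Qed.

Definition CE' (m : nat) (s : seq L) : B :=
  \sum_(i < m) (-1) ^+ i *: psi (nth 0 s i) (f (rem_at i s)) +
  \sum_(j < m) \sum_(l < m | (j < l)%N)
     (-1) ^+ (j + l) *: f (phi (nth 0 s j) (nth 0 s l) :: rem_at j (rem_at l s)).
Lemma CE_dE s : CE_d phi psi f s = CE' (size s) s.
Proof. by []. Qed.

Lemma CE_swap s a : size s = n.+1 -> (a.+1 < n.+1)%N ->
  CE' n.+1 (lmap s (swn a) n.+1) = - CE' n.+1 s.
Proof.
move=> Hs Ha.
set s' := lmap s (swn a) n.+1.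
have Hs' : size s' = n.+1 by rewrite size_lmap.
have HA : (a < n.+1)%N by lia.
pose A : 'I_n.+1 := Ordinal HA; pose A1 : 'I_n.+1 := Ordinal Ha.
pose tau := tperm A A1.
have Htau : forall i, nat_of_ord (tau i) = swn a i := tperm_val (x:=A) (y:=A1) (p:=a) erefl erefl.
have Hnth : forall i, (i < n.+1)%N -> nth 0 s' i = nth 0 s (swn a i).
  by move=> i Hi; rewrite nth_lmap.
rewrite /CE' opprD; congr (_ + _).
- rewrite [in RHS](reindex_inj (@perm_inj _ tau)) /= -sumrN; apply: eq_bigr => i _.
  have Hi := ltn_ord i.
  rewrite Htau Hnth // (rem_atE (s := s')) ?Hs' // (rem_atE (s := s)) ?Hs /=; last first.
    by have := ltn_ord (tau i); rewrite Htau.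
  rewrite /s' lmap_comp; last by move=> q Hq; elim_b.
  case: (boolP ((nat_of_ord i == a) || (nat_of_ord i == a.+1))) => Hia.
  + rewrite (@eq_lmap _ _ _ (bmp (swn a i))); last first.
      by move=> q Hq; move/orP: Hia => [/eqP|/eqP] E; elim_b.
    rewrite -scaleNr; congr (_ *: _); apply: sgn_adj.
    by move/orP: Hia => [/eqP|/eqP] E; elim_b.
  + have [N1 N2] : nat_of_ord i <> a /\ nat_of_ord i <> a.+1.
      by move: Hia; case/norP => /eqP ? /eqP ?.
    have Hsw : swn a i = i by elim_b.
    rewrite Hsw.
    have [p [Hp1 Hp2]] : exists p, (p.+1 < n)%N /\
        forall q, (q < n)%N -> swn a (bmp i q) = bmp i (swn p q).
      case: (ltnP i a) => H; [exists a.-1 | exists a]; split; try lia;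
        move=> q Hq; elim_b.
    rewrite (@eq_lmap _ _ _ (fun q => bmp i (swn p q))) //.
    rewrite -(@lmap_comp _ s (bmp i) (swn p) n n); last by move=> q Hq; elim_b.
    by rewrite f_swap ?size_lmap // psiN scalerN.
- rewrite !pair_big_dep /=.
  pose pi2 := fun p : 'I_n.+1 * 'I_n.+1 => if tau p.1 == p.2 then p else (tau p.1, tau p.2).
  have pi_inv : involutive pi2.
    move=> [j l]; rewrite /pi2 /=; case: (eqVneq (tau j) l) => [E|NE] /=.
      by rewrite E eqxx.
    rewrite !tpermK.
    have -> : (j == tau l) = false.
      by apply/eqP => E'; move/eqP: NE; apply; rewrite E' tpermK.
    by [].
  rewrite [in RHS](reindex_inj (inv_inj pi_inv)) /= -sumrN.
  apply: eq_big => [[j l]|[j l] /= Hjl].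
    rewrite /pi2 /=; case: eqP => //= NE.
    have NE' : swn a j <> nat_of_ord l by move=> E; apply: NE; apply: ord_inj; rewrite Htau.
    rewrite !Htau; have := ltn_ord j; have := ltn_ord l.
    by move=> *; apply/idP/idP => H; elim_b.
  have Hl := ltn_ord l.
  rewrite (rem2E (s := s')) ?Hs' //= !Hnth //.
  rewrite /s' lmap_comp; last by move=> q Hq; elim_b.
  have Hn : (0 < n)%N by lia.
  rewrite /pi2 /=; case: eqP => [E|NE].
  + have E' : swn a j = nat_of_ord l by rewrite -Htau E.
    have E'' : swn a l = nat_of_ord j by elim_b.
    rewrite /= E' E'' phi_anti rem2E ?Hs //=.
    rewrite (@eq_lmap _ _ _ (fun q => bmp l (bmp j q))); last by move=> q Hq; elim_b.
    by rewrite fconsN ?size_lmap // scalerN.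
  + have NE' : swn a j <> nat_of_ord l by move=> E; apply: NE; apply: ord_inj; rewrite Htau.
    have Hlt : (tau j < tau l)%N by rewrite !Htau; elim_b.
    have Hlt' : (swn a j < swn a l)%N by rewrite -!Htau.
    have Hl' : (swn a l < size s)%N by rewrite Hs -Htau.
    rewrite /= !Htau (rem2E Hlt' Hl') Hs /=.
    case: (boolP [|| nat_of_ord j == a, nat_of_ord j == a.+1, nat_of_ord l == a | nat_of_ord l == a.+1]) => Hc.
    * rewrite (@eq_lmap _ _ _ (fun q => bmp (swn a l) (bmp (swn a j) q))); last first.
        by move=> q Hq; move: Hc => /or4P [/eqP|/eqP|/eqP|/eqP] E; elim_b.
      rewrite -scaleNr; congr (_ *: _); apply: sgn_adj.
      by move: Hc => /or4P [/eqP|/eqP|/eqP|/eqP] E; elim_b.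
    * have [N1 N2 N3 N4] : [/\ nat_of_ord j <> a, nat_of_ord j <> a.+1,
                              nat_of_ord l <> a & nat_of_ord l <> a.+1].
        by move: Hc; rewrite !negb_or => /and4P [/eqP ? /eqP ? /eqP ? /eqP ?].
      have -> : swn a j = j by elim_b.
      have -> : swn a l = l by elim_b.
      have [p [Hp1 Hp2]] : exists p, (p.+1 < n.-1)%N /\
          forall q, (q < n.-1)%N -> swn a (bmp l (bmp j q)) = bmp l (bmp j (swn p q)).
        case: (ltnP l a) => H1; first by exists (a - 2)%N; split; try lia; move=> q Hq; elim_b.
        case: (ltnP j a) => H2; first by exists (a - 1)%N; split; try lia; move=> q Hq; elim_b.
        by exists a; split; try lia; move=> q Hq; elim_b.
      rewrite (@eq_lmap _ _ _ (fun q => bmp l (bmp j (swn p q)))) //.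
      rewrite -(@lmap_comp _ s (fun q => bmp l (bmp j q)) (swn p) n.-1 n.-1); last by move=> q Hq; elim_b.
      by rewrite f_swap_cons ?size_lmap // scalerN.
Qed.


Lemma CE_skew : Defs.skew n.+1 (CE_d phi psi f).
Proof.
move=> s Hs sg.
have H : Pskew (m := n.+1) (CE_d phi psi f) sg.
  apply: skew_of_swaps => u p Hu Hp.
  by rewrite !CE_dE size_lmap Hu; exact: CE_swap.
exact: H s Hs.
Qed.

Definition lin (h : L -> B) := forall a x y, h (a *: x + y) = a *: h x + h y.
Lemma linD h1 h2 : lin h1 -> lin h2 -> lin (fun v => h1 v + h2 v).
Proof.
move=> H1 H2 a x y; rewrite H1 H2 scalerDr -!addrA; congr (_ + _).
by rewrite addrCA.
Qed.
Lemma linZc c h : lin h -> lin (fun v => c *: h v).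
Proof. by move=> H a x y; rewrite H scalerDr !scalerA mulrC. Qed.
Lemma lin_sum (I : Type) (r : seq I) (P : pred I) (F : I -> L -> B) :
  (forall i, P i -> lin (F i)) -> lin (fun v => \sum_(i <- r | P i) F i v).
Proof.
move=> H a x y; rewrite scaler_sumr -big_split /=.
by apply: eq_bigr => i Pi; exact: H.
Qed.

Lemma CE_multilinear : multilinear n.+1 (CE_d phi psi f).
Proof.
move=> s Hs p Hp a x y.
have Hsz : forall v, size (set_nth 0 s p v) = n.+1.
  by move=> v; rewrite size_set_nth Hs; apply/maxn_idPr.
rewrite !CE_dE !Hsz.
suff : lin (fun v => CE' n.+1 (set_nth 0 s p v)) by apply.
apply: linD.
  apply: lin_sum => i _; apply: linZc => a' x' y'.
  have Hi := ltn_ord i.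
  rewrite !nth_set; case: (eqVneq (nat_of_ord i) p) => [E|NE].
    by rewrite -E !rem_set_same ?Hs.
  have Hi' : (nat_of_ord i < size s)%N by rewrite Hs.
  have Hps : (p < size s)%N by rewrite Hs.
  have [p' [Hp'1 _ _] Ep'] := rem_setP NE Hi' Hps.
  rewrite !Ep' Hfml ?Hpsi2 //; last by rewrite Hs in Hp'1.
  by rewrite size_rem_at Hs.
apply: lin_sum => j _; apply: lin_sum => l Hjl; apply: linZc => a' x' y'.
have Hl := ltn_ord l; have Hj := ltn_ord j.
have Hn : (0 < n)%N by lia.
have Hls : (nat_of_ord l < size s)%N by rewrite Hs.
have Hps : (p < size s)%N by rewrite Hs.
have HlR : size (rem_at l s) = n by rewrite size_rem_at Hs.
have Hjs : (nat_of_ord j < size (rem_at l s))%N by rewrite HlR; lia.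
have HR : size (rem_at j (rem_at l s)) = n.-1 by rewrite size_rem_at // HlR.
rewrite !nth_set.
case: (eqVneq (nat_of_ord j) p) => [Ej|NEj].
  have NE : nat_of_ord l != p by apply/eqP; lia.
  rewrite (negbTE NE).
  have [p1 [_ Hp1 _] Ep1] := rem_setP NE Hls Hps.
  have Ep1' : p1 = p by apply: Hp1; lia.
  rewrite !Ep1 Ep1' -Ej !rem_set_same //.
  by rewrite Hphi1 fcons_lin.
case: (eqVneq (nat_of_ord l) p) => [El|NEl].
  rewrite -El !rem_set_same ?Hs //.
  by rewrite Hphi2 fcons_lin.
have [p1 [Hp1a Hp1b Hp1c] Ep1] := rem_setP NEl Hls Hps.
rewrite !Ep1.
have NE2 : nat_of_ord j != p1.
  apply/eqP => E; move/eqP: NEj; move/eqP: NEl => NEl NEj.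
  case: (ltnP p l) => H; [have := Hp1b H | have := Hp1c]; lia.
have Hp1s : (p1 < size (rem_at l s))%N by rewrite HlR; rewrite Hs in Hp1a.
have [p2 [Hp2a _ _] Ep2] := rem_setP NE2 Hjs Hp1s.
rewrite !Ep2.
have H0 : size (phi s`_j s`_l :: rem_at j (rem_at l s)) = n by rewrite /= HR; lia.
have Hp2 : (p2.+1 < n)%N by rewrite HlR in Hp2a; lia.
exact: (Hfml H0 Hp2 a' x' y').
Qed.

Lemma CE_shuffle s : size s = n.+1 ->
  CE' n.+1 s =
  \sum_(sg : 'S_n.+1 | unshuffle 1 sg) (-1) ^+ sg *:
      psi (nth 0 (plist s sg) 0) (f (drop 1 (plist s sg)))
  - \sum_(sg : 'S_n.+1 | unshuffle 2 sg) (-1) ^+ sg *: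
      f (phi (nth 0 (plist s sg) 0) (nth 0 (plist s sg) 1) :: drop 2 (plist s sg)).
Proof.
move=> Hs; rewrite /CE' sum_unsh1 sum_unsh2; congr (_ + _).
  apply: eq_bigr => i _; have Hi := ltn_ord i.
  rewrite odd_rho // signr_odd.
  rewrite (plist_lmap s (g := rhon i)) => [|x]; last exact: rhoE.
  rewrite nth_lmap // drop_lmap rem_atE ?Hs //=.
  congr (_ *: psi _ (f _)); rewrite subn1 /=.
  by apply: eq_lmap => q Hq; elim_b.
rewrite -sumrN pair_big_dep /=; apply: eq_bigr => [[j l]] /= Hjl.
have Hl := ltn_ord l.
rewrite odd_rho2 //.
rewrite signr_addb !signr_odd exprS mulN1r mulNr scaleNr opprK -exprD.
rewrite (plist_lmap s (g := fun x => rhon l (rhon j.+1 x))) => [|x]; last exact: rho2E.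
have Hn : (0 < n)%N by lia.
rewrite !nth_lmap // drop_lmap rem2E ?Hs //.
have -> : rhon l (rhon j.+1 0) = j by elim_b.
have -> : rhon l (rhon j.+1 1) = l by elim_b.
have -> : (n.+1 - 2 = n.-1)%N by lia.
congr (_ *: f (_ :: _)).
by apply: eq_lmap => q Hq; elim_b.
Qed.


Lemma main_induced (C : lmodType K) (cop : C -> seq (C * C)) :
  @induced_by K L B C cop n.+1 (CE_d phi psi f) (@deltaF K L B phi psi C cop n.+1 f).
Proof.
move=> g c; rewrite /deltaF /induced /=.
have E1 : forall (P : pred 'S_n.+1) (r : seq (seq C)) (F : 'S_n.+1 -> seq C -> B),
    \sum_(sg | P sg) (-1) ^+ sg *: \sum_(t <- r) F sg t =
    \sum_(t <- r) \sum_(sg | P sg) (-1) ^+ sg *: F sg t.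
  move=> P r F; rewrite [RHS]exchange_big; apply: eq_bigr => sg _; exact: scaler_sumr.
rewrite !E1 -sumrB.
apply: eq_bigr => t _.
set sv := [seq g i (nth 0 t i) | i <- enum 'I_n.+1].
have Hsv : size sv = n.+1 by rewrite size_map size_enum_ord.
have Hpv : forall sg, permuted_vals sg g t = plist sv sg.
  by move=> sg; rewrite /permuted_vals /plist; apply: eq_map => i; rewrite /sv nth_map_enum.
rewrite CE_dE Hsv CE_shuffle //.
by congr (_ - _); apply: eq_bigr => sg _; rewrite /= Hpv.
Qed.

Lemma main_TD (C : lmodType K) (cop : C -> seq (C * C)) :
  @TD_skew K L B C cop n.+1 (CE_d phi psi f) (@deltaF K L B phi psi C cop n.+1 f).
Proof.
split; first exact: main_induced.
move=> sg g c; rewrite main_induced /induced /twisted scaler_sumr /=.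
apply: eq_bigr => t _.
set u := [seq g i (nth 0 t ((sg^-1)%g i)) | i <- enum 'I_n.+1].
have Hu : size u = n.+1 by rewrite size_map size_enum_ord.
have -> : [seq g (sg i) (nth 0 t i) | i <- enum 'I_n.+1] = plist u sg.
  by rewrite /plist; apply: eq_map => i; rewrite /u nth_map_enum permK.
exact: CE_skew Hu sg.
Qed.
End Main.

Theorem proposition6 (k : fieldType) (C L B : lmodType k)
    (cop : C -> seq (C * C)) (phi : L -> L -> L) (psi : L -> B -> B)
    (n : nat) (f : seq L -> B) :
  coalgebra cop -> lie_algebra phi -> lie_module phi psi -> Alt n f ->
  @induced_by k L B C cop n.+1 (CE_d phi psi f) (@deltaF k L B phi psi C cop n.+1 f) /\
  Alt n.+1 (CE_d phi psi f) /\
  @TD_skew k L B C cop n.+1 (CE_d phi psi f) (@deltaF k L B phi psi C cop n.+1 f).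
Proof.
move=> _ [Hphi1 [Hphi2 [Hphi0 _]]] [Hpsi1 [Hpsi2 _]] [Hfml Hfsk].
split; first by apply: main_induced; assumption.
split; last by apply: main_TD; assumption.
split; first by apply: CE_multilinear; assumption.
by apply: CE_skew; assumption.
Qed.
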